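(* Let the standing assumptions (listed in the context) hold. Let $(x_k)$ have a cluster point $x^*$ such that $\mathcal{J}|_{\mathcal{N}}$ is $\kappa$-strongly convex, where $\mathcal{N}\subset\Omega$ is a convex neighborhood of $x^*$. Then 1) $\mathcal{J}(x^* )+\kappa\|x-x^*\|^2\le\mathcal{J}(x)$ for all $x\in\mathcal{N}$; 2) the iterates $(x_k)$ converge r-linearly to $x^*$; 3) the gradients $(\nabla\mathcal{J}(x_k))$ converge r-linearly to zero; 4) the function values $(\mathcal{J}(x_k))$ converge q-linearly to $\mathcal{J}(x^* )$; specifically, if $\bar k$ is such that $x_k\in\mathcal{N}$ for all $k\ge\bar k$, then $\mathcal{J}(x_{k+1})-\mathcal{J}(x^* )\le\left(1-\frac{2\sigma\alpha_k\kappa}{\|B_k\|}\right)[\mathcal{J}(x_k)-\mathcal{J}(x^* )]$ for all $k\ge\bar k$, and the supremum of the term in round brackets is strictly smaller than 1.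
   Context: Let $\mathcal{X}$ be a Hilbert space and $\mathcal{J}:\mathcal{X}\to\mathbb{R}$. Algorithm SLBFGS (structured inverse L-BFGS): inputs $x_0\in\mathcal{X}$, $\epsilon\geq0$, $\ell\in\mathbb{N}_0$, $c_0\geq 0$, $C_0\in[c_0,\infty]$, $c_s,c_1,c_2>0$; let $\tau_0>0$. For $k=0,1,2,\ldots$: let $m=\max\{0,k-\ell\}$; choose a symmetric positive semi-definite bounded linear operator $S_k$; set $B_k^{(0)}=\tau_k I+S_k$; let $B_k$ be obtained from $B_k^{(0)}$ and the currently stored pairs $(s_j,y_j)$, $m\le j\le k-1$, by successive L-BFGS updates $B\mapsto B+\frac{yy^T}{y^Ts}-\frac{Bss^TB}{s^TBs}$; set $d_k=-B_k^{-1}\nabla\mathcal{J}(x_k)$; compute a step length $\alpha_k>0$ by a line search; set $s_k=\alpha_kd_k$, $x_{k+1}=x_k+s_k$, $y_k=\nabla\mathcal{J}(x_{k+1})-\nabla\mathcal{J}(x_k)$; store $(s_k,y_k)$ only if $y_k^Ts_k>c_s\|s_k\|^2$; if $k\ge\ell$ remove $(s_m,y_m)$ from storage; stop with output $x_{k+1}$ if $\|\nabla\mathcal{J}(x_{k+1})\|\le\epsilon$; set $z_k=y_k-S_{k+1}s_k$, $\omega^l_{k+1}=\min\{c_0,c_1\|\nabla\mathcal{J}(x_{k+1})\|^{c_2}\}$, $\omega^u_{k+1}=\max\{C_0,(c_1\|\nabla\mathcal{J}(x_{k+1})\|^{c_2})^{-1}\}$; with $P(t)=\min\{\max\{t,\omega^l_{k+1}\},\omega^u_{k+1}\}$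 and $\rho=z_k^Ts_k$ let $\tau^s=P(\rho/\|s_k\|^2)$, $\tau^g=P(\|z_k\|/\|s_k\|)$, $\tau^z=P(\|z_k\|^2/\rho)$; if $\rho>0$ choose $\tau_{k+1}\in[\tau^s,\tau^z]$, else choose $\tau_{k+1}\in[\tau^s,\tau^g]$. Line searches: Armijo with backtracking means, for fixed $\beta,\sigma\in(0,1)$, $\alpha_k$ is the largest number in $\{1,\beta,\beta^2,\ldots\}$ with $\mathcal{J}(x_{k+1})\le\mathcal{J}(x_k)+\alpha_k\sigma\nabla\mathcal{J}(x_k)^Td_k$; the Wolfe–Powell conditions are this Armijo inequality together with $\nabla\mathcal{J}(x_{k+1})^Td_k\ge\eta\nabla\mathcal{J}(x_k)^Td_k$ for fixed $\eta\in(\sigma,1)$. Let $\Omega=\{x:\mathcal{J}(x)\le\mathcal{J}(x_0)\}$. Standing assumptions: 1) $\mathcal{J}$ is continuously differentiable and bounded below; 2) $\nabla\mathcal{J}$ is Lipschitz continuous on $\Omega$ with constant $L>0$; 3) $(\|S_k\|)$ is bounded; 4) the step sizes consistently satisfy the Armijo condition computed by backtracking, or consistently satisfy the Wolfe–Powell conditions (no uniform continuity assumption on a neighborhood of $\Omega$ is required); 5) $c_0=0$ is only chosen if then $\sup_k\|(B_k^{(0)})^{-1}\|<\infty$; 6) $C_0=\infty$ is only chosen if either the interval $[\tau^s,\tau^z]$ is replaced by $[\tau^s,\tau^g]$, or $\mathcal{J}$ is twice continuously differentiable, $\int_0^1\nabla^2\mathcal{J}(x_k+ts_k)\,dt-S_{k+1}$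 is symmetric positive semi-definite for all $k$ with bounded norms; 7) the algorithm is run with $\epsilon=0$ and generates an infinite sequence $(x_k)$; 8) $(\|B_k\|)$ and $(\|B_k^{-1}\|)$ are bounded. *)

(* Defs.v *)
(* A real Hilbert space is modelled as a complete
   normed module X over R : realType together with an inner product ip whose
   induced norm is the norm of X. *)
From HB Require Import structures.
From mathcomp Require Import all_boot all_order all_algebra.
From mathcomp Require Import all_classical all_reals all_analysis.
Set Implicit Arguments. Unset Strict Implicit. Unset Printing Implicit Defensive.
Import Order.TTheory GRing.Theory Num.Theory Num.Def.
Import numFieldNormedType.Exports.
Local Open Scope classical_set_scope.
Local Open Scope ring_scope.

Section Defs.
Variables (R : realType) (X : completeNormedModType R).

Definition inner_product (ip : X -> X -> R) : Prop :=
  [/\ forall u v, ip u v = ip v u,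
      forall a u v w, ip (a *: u + v) w = a * ip u w + ip v w
    & forall u, ip u u = `|u| ^+ 2].

Definition linear_op (A : X -> X) : Prop :=
  forall a u v, A (a *: u + v) = a *: A u + A v.

Definition bounded_linear (A : X -> X) : Prop :=
  linear_op A /\ exists M : R, forall v, `|A v| <= M * `|v|.

Definition opnorm (A : X -> X) : R :=
  sup [set `|A v| | v in [set v : X | `|v| <= 1]].

Definition symmetric_op (ip : X -> X -> R) (A : X -> X) : Prop :=
  forall u v, ip (A u) v = ip u (A v).

Definition psd_op (ip : X -> X -> R) (A : X -> X) : Prop :=
  forall v, 0 <= ip (A v) v.

Definition inverse_ops (A Ainv : X -> X) : Prop :=
  forall v, A (Ainv v) = v /\ Ainv (A v) = v.

(* L-BFGS update  B |-> B + y y^T/(y^T s) - B s s^T B/(s^T B s) *)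
Definition bfgs_update (ip : X -> X -> R) (B : X -> X) (s y : X) : X -> X :=
  fun v => B v + (ip y v / ip y s) *: y - (ip (B s) v / ip s (B s)) *: B s.

(* successive updates of B0 by the pairs j in js (in order), using only the
   pairs that were stored, i.e. those with y_j^T s_j > c_s ||s_j||^2 *)
Definition lbfgs_op (ip : X -> X -> R) (cs : R) (s y : nat -> X)
    (B0 : X -> X) (js : seq nat) : X -> X :=
  foldl (fun B j => if cs * `|s j| ^+ 2 < ip (y j) (s j)
                    then bfgs_update ip B (s j) (y j) else B) B0 js.

(* indices m <= j <= k-1 with m = max(0, k - l) *)
Definition stored_window (l k : nat) : seq nat := iota (k - l) (k - (k - l)).

Definition projP (wl : R) (wu : \bar R) (t : R) : R :=
  fine (mine (Num.max t wl)%:E wu).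

(* kappa-strong convexity of J on the (convex) set N, with the convention
   matching conclusion 1): J - kappa ||.||^2 convex on N *)
Definition strongly_convex_on (J : X -> R) (N : set X) (kappa : R) : Prop :=
  forall u v (l : R), N u -> N v -> 0 <= l <= 1 ->
    J (l *: u + (1 - l) *: v) <=
      l * J u + (1 - l) * J v - kappa * l * (1 - l) * `|u - v| ^+ 2.

Definition convex_set (N : set X) : Prop :=
  forall u v (l : R), N u -> N v -> 0 <= l <= 1 -> N (l *: u + (1 - l) *: v).


Definition armijo (ip : X -> X -> R) (J : X -> R) (g : X -> X) (sigma : R)
    (xk dk : X) (a : R) : Prop :=
  J (xk + a *: dk) <= J xk + a * sigma * ip (g xk) dk.

Definition armijo_backtracking (ip : X -> X -> R) (J : X -> R) (g : X -> X)
    (sigma beta : R) (xk dk : X) (a : R) : Prop :=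
  exists i : nat, a = beta ^+ i /\ armijo ip J g sigma xk dk a /\
    forall j : nat, (j < i)%N -> ~ armijo ip J g sigma xk dk (beta ^+ j).

Definition wolfe_powell (ip : X -> X -> R) (J : X -> R) (g : X -> X)
    (sigma eta : R) (xk dk : X) (a : R) : Prop :=
  armijo ip J g sigma xk dk a /\ eta * ip (g xk) dk <= ip (g (xk + a *: dk)) dk.

(* rule for tau_{k+1}; gnext = grad J(x_{k+1}), z = z_k, s = s_k.
   useg = true is the variant in which [tau^s, tau^z] is replaced by
   [tau^s, tau^g]. *)
Definition tau_rule (ip : X -> X -> R) (c0 : R) (C0 : \bar R) (c1 c2 : R)
    (useg : bool) (gnext z s : X) (tnext : R) : Prop :=
  let wl := Num.min c0 (c1 * `|gnext| `^ c2) in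
  let wu := maxe C0 ((c1 * `|gnext| `^ c2)^-1)%:E in
  let rho := ip z s in
  let ts := projP wl wu (rho / `|s| ^+ 2) in
  let tg := projP wl wu (`|z| / `|s|) in
  let tz := projP wl wu (`|z| ^+ 2 / rho) in
  if (0 < rho) && ~~ useg then ts <= tnext <= tz else ts <= tnext <= tg.

(* second alternative of standing assumption 6): J twice continuously
   differentiable (grad J = g continuously Frechet differentiable with
   derivative H), and int_0^1 Hess J(x_k + t s_k) dt - S_{k+1} symmetric psd
   with bounded norms; the operator integral is taken weakly. *)
Definition hessian_condition (ip : X -> X -> R) (g : X -> X)
    (S : nat -> X -> X) (x s : nat -> X) : Prop :=
  exists H : X -> X -> X,
    (forall u, bounded_linear (H u)) /\
    (forall u, differentiable g u /\ forall h, 'd g u h = H u h) /\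
    (forall u0 (e : R), 0 < e -> exists2 del : R, 0 < del &
        forall u, `|u - u0| < del -> opnorm (fun v => H u v - H u0 v) < e) /\
    exists (A : nat -> X -> X) (M : R), forall k,
      [/\ bounded_linear (A k),
          (forall v w, (ip w (A k v))%:E =
             (\int[lebesgue_measure]_(t in `[0%R, 1%R]%classic)
                 (ip w (H (x k + t *: s k) v))%:E)%E),
          symmetric_op ip (fun v => A k v - S k.+1 v),
          psd_op ip (fun v => A k v - S k.+1 v)
        & opnorm (fun v => A k v - S k.+1 v) <= M].

End Defs.

Definition rlinear (R : realType) (e : nat -> R) : Prop :=
  exists (C q : R), 0 <= q < 1 /\ forall k, e k <= C * q ^+ k.

Definition qlinear (R : realType) (e : nat -> R) : Prop :=
  exists (q : R) (K : nat), 0 <= q < 1 /\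
    forall k, (K <= k)%N -> `|e k.+1| <= q * `|e k|.

(* Main.v *)
Require Import Defs.
From HB Require Import structures.
From mathcomp Require Import all_boot all_order all_algebra.
From mathcomp Require Import all_classical all_reals all_analysis.
From mathcomp Require Import ring lra.
Set Implicit Arguments. Unset Strict Implicit. Unset Printing Implicit Defensive.
Import Order.TTheory GRing.Theory Num.Theory Num.Def.
Import numFieldNormedType.Exports.
Local Open Scope classical_set_scope.
Local Open Scope ring_scope.

Section RealLemmas.
Variable R : realType.

Lemma quad_disc (a b c : R) : 0 <= c ->
  (forall t, 0 <= a - 2 * t * b + t ^+ 2 * c) -> b ^+ 2 <= a * c.
Proof.
move=> c0 H; have [cgt0|] := ltP 0 c.
  have := H (b / c); set t := b / c => Ht.
  have tc : t * c = b by rewrite /t divfK // gt_eqF.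
  rewrite -tc in Ht *; have := mulr_ge0 (ltW cgt0) Ht; nra.
move=> cle0; have c00 : c = 0 by apply/eqP; rewrite eq_le cle0 c0.
subst c.
rewrite mulr0; case: (eqVneq b 0) => [->|bn0]; first by rewrite expr0n.
have := H ((a + 1) / (2 * b)).
have -> : 2 * ((a + 1) / (2 * b)) * b = a + 1.
  by field.
nra.
Qed.

Lemma le_limit0 (a b c : R) : (forall l, 0 < l <= 1 -> a <= b + l * c) -> a <= b.
Proof.
move=> H; rewrite leNgt; apply/negP => ab.
have [cle0|cgt0] := leP c 0.
  have := H 1; rewrite lexx ltr01 mul1r => /(_ isT); lra.
pose l := Num.min 1 ((a - b) / (2 * c)).
have l0 : 0 < l by rewrite lt_min ltr01 /= divr_gt0 // ?subr_gt0 // mulr_gt0.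
have l1 : l <= 1 by rewrite ge_min lexx.
have := H l; rewrite l0 l1 => /(_ isT).
have : l * c <= (a - b) / 2.
  have : l <= (a - b) / (2 * c) by rewrite ge_min lexx orbT.
  rewrite ler_pdivlMr ?mulr_gt0 // => h.
  rewrite ler_pdivlMr //; nra.
lra.
Qed.

End RealLemmas.
Section Bil.
Variables (R : realType) (X : completeNormedModType R) (f : X -> X -> R).
Hypothesis fsym : forall u v, f u v = f v u.
Hypothesis flin : forall a u v w, f (a *: u + v) w = a * f u w + f v w.

Lemma f0l w : f 0 w = 0.
Proof. have := flin 1 0 0 w; rewrite scaler0 add0r mul1r => h; lra. Qed.
Lemma fDl u v w : f (u + v) w = f u w + f v w.
Proof. by rewrite -[u]scale1r flin mul1r scale1r. Qed.
Lemma fZl a u w : f (a *: u) w = a * f u w.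
Proof. by rewrite -[a *: u]addr0 flin f0l addr0. Qed.
Lemma fNl u w : f (- u) w = - f u w.
Proof. by rewrite -scaleN1r fZl mulN1r. Qed.
Lemma fBl u v w : f (u - v) w = f u w - f v w.
Proof. by rewrite fDl fNl. Qed.
Lemma f0r w : f w 0 = 0.
Proof. by rewrite fsym f0l. Qed.
Lemma fDr u v w : f w (u + v) = f w u + f w v.
Proof. by rewrite fsym fDl !(fsym w). Qed.
Lemma fZr a u w : f w (a *: u) = a * f w u.
Proof. by rewrite fsym fZl (fsym w). Qed.
Lemma fNr u w : f w (- u) = - f w u.
Proof. by rewrite fsym fNl (fsym w). Qed.
Lemma fBr u v w : f w (u - v) = f w u - f w v.
Proof. by rewrite fDr fNr. Qed.

Hypothesis fpos : forall u, 0 <= f u u.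

Lemma f_CS u v : f u v ^+ 2 <= f u u * f v v.
Proof.
apply: quad_disc; first exact: fpos.
move=> t; have := fpos (u - t *: v).
rewrite fBl !fBr !fZl !fZr (fsym v u).
suff -> : f u u - t * f u v - (t * f u v - t * (t * f v v)) = f u u - 2 * t * f u v + t ^+ 2 * f v v by [].
ring.
Qed.

End Bil.

Section Ops.
Variables (R : realType) (X : completeNormedModType R).

Lemma lin0 (A : X -> X) : linear_op A -> A 0 = 0.
Proof. move=> hA; have := hA 1 0 0; rewrite scaler0 add0r scale1r => h.
by apply: (addrI (A 0)); rewrite addr0 -h. Qed.

Lemma linZ (A : X -> X) a v : linear_op A -> A (a *: v) = a *: A v.
Proof. by move=> hA; rewrite -[a *: v]addr0 hA lin0 // addr0. Qed.

Lemma linD (A : X -> X) u v : linear_op A -> A (u + v) = A u + A v.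
Proof. by move=> hA; rewrite -[u]scale1r hA !scale1r. Qed.

Lemma linN (A : X -> X) v : linear_op A -> A (- v) = - A v.
Proof. by move=> hA; rewrite -scaleN1r linZ // scaleN1r. Qed.

Lemma linB (A : X -> X) u v : linear_op A -> A (u - v) = A u - A v.
Proof. by move=> hA; rewrite linD // linN. Qed.

Lemma opnorm_ub (A : X -> X) : bounded_linear A ->
  has_ubound [set `|A v| | v in [set v : X | `|v| <= 1]].
Proof.
move=> [hA [M hM]]; exists (Num.max M 0) => _ [v /= v1 <-].
apply: le_trans (hM v) _; have : M <= Num.max M 0 by rewrite le_max lexx.
have : 0 <= Num.max M 0 by rewrite le_max lexx orbT.
have := normr_ge0 v; have [M0|M0] := leP 0 M; nra.
Qed.

Lemma opnorm_ge0 (A : X -> X) : bounded_linear A -> 0 <= opnorm A.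
Proof.
move=> hA; have h := ub_le_sup (opnorm_ub hA); rewrite /opnorm; apply: h.
by exists 0; rewrite /= ?normr0 // lin0 ?normr0 //; case: hA.
Qed.

Lemma opnorm_le (A : X -> X) v : bounded_linear A -> `|A v| <= opnorm A * `|v|.
Proof.
move=> hA; have [->|vn0] := eqVneq v 0.
  by rewrite lin0 ?normr0 ?mulr0 //; case: hA.
have nv : 0 < `|v| by rewrite normr_gt0.
have key : `|A (`|v|^-1 *: v)| <= opnorm A.
  have h := ub_le_sup (opnorm_ub hA); rewrite /opnorm; apply: h.
  exists (`|v|^-1 *: v) => //=.
  by rewrite normrZ ger0_norm ?invr_ge0 ?normr_ge0 // mulVf ?gt_eqF.
move: key; rewrite linZ; last by case: hA.
by rewrite normrZ ger0_norm ?invr_ge0 ?normr_ge0 // mulrC ler_pdivrMr.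
Qed.

End Ops.

Section Hilb.
Variables (R : realType) (X : completeNormedModType R) (ip : X -> X -> R).
Hypothesis Hip : inner_product ip.

Lemma ip_sym u v : ip u v = ip v u.
Proof. by case: Hip. Qed.
Lemma ip_lin a u v w : ip (a *: u + v) w = a * ip u w + ip v w.
Proof. by case: Hip. Qed.
Lemma ip_norm u : ip u u = `|u| ^+ 2.
Proof. by case: Hip. Qed.
Lemma ip_pos u : 0 <= ip u u.
Proof. by rewrite ip_norm sqr_ge0. Qed.

Lemma ip_CS u v : `|ip u v| <= `|u| * `|v|.
Proof.
have h := f_CS ip_sym ip_lin ip_pos u v.
rewrite !ip_norm in h.
have h1 := real_normK (num_real (ip u v)); have h2 := normr_ge0 (ip u v).
have h3 := normr_ge0 u; have h4 := normr_ge0 v.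
have H1 := mulr_ge0 (normr_ge0 u) (normr_ge0 v).
rewrite leNgt; apply/negP => H.
nra.
Qed.

Lemma psd_key (B : X -> X) w : bounded_linear B -> symmetric_op ip B -> psd_op ip B ->
  `|B w| ^+ 2 <= opnorm B * ip (B w) w.
Proof.
move=> hB hs hp.
have hl : linear_op B by case: hB.
pose f u v := ip (B u) v.
have fsym : forall u v, f u v = f v u by move=> u v; rewrite /f hs ip_sym.
have flin : forall a u v w, f (a *: u + v) w = a * f u w + f v w.
  by move=> a u v w'; rewrite /f hl ip_lin.
have h := f_CS fsym flin hp w (B w).
have e1 : f w (B w) = `|B w| ^+ 2 by rewrite /f ip_norm.
have e2 : f (B w) (B w) <= opnorm B * `|B w| ^+ 2.
  rewrite /f; apply: le_trans (ler_norm _) _; apply: le_trans (ip_CS _ _) _.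
  have := opnorm_le (B w) hB; have := normr_ge0 (B w); nra.
rewrite e1 in h; rewrite /f in h e2.
have := hp w; have := hp (B w); have := opnorm_ge0 hB; have := sqr_ge0 `|B w|.
have [->|nz] := eqVneq `|B w| 0.
  by move=> _ o _ p; rewrite expr0n /= mulr_ge0.
have pz : 0 < `|B w| ^+ 2 by rewrite exprn_gt0 // lt_def nz normr_ge0.
move=> _ o q p.
have h2 : `|B w| ^+ 2 * `|B w| ^+ 2 <= `|B w| ^+ 2 * (opnorm B * ip (B w) w).
  have := ler_wpM2l p e2; move: h; nra.
by rewrite ler_pM2l in h2.
Qed.


Lemma phi_deriv (J : X -> R) (g : X -> X) (u w : X) :
  (forall u, differentiable J u /\ forall h, 'd J u h = ip (g u) h) ->
  forall t : R, is_derive t 1 (fun t : R => J (u + t *: w)) (ip (g (u + t *: w)) w).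
Proof.
move=> HJ t.
pose aff := (cst u + ( *:%R ^~ w)) : R -> X.
have ea : (fun t : R => J (u + t *: w)) = J \o aff by [].
have da : is_diff t aff (cst 0 + ( *:%R ^~ w)) by exact: is_diffD.
have [dJ dJe] := HJ (aff t).
have dJ' : is_diff (aff t) J ('d J (aff t)) by apply: DiffDef.
have dphi : is_diff t (J \o aff) ('d J (aff t) \o (cst 0 + ( *:%R ^~ w))).
  exact: is_diff_comp.
rewrite ea.
apply: DeriveDef; first exact: diff_derivable.
rewrite deriveE // diff_val /= dJe /= add0r scale1r.
by [].
Qed.

Lemma descent (J : X -> R) (g : X -> X) (L : R) (Om : X -> Prop) u w :
  (forall u, differentiable J u /\ forall h, 'd J u h = ip (g u) h) ->
  0 <= L ->
  (forall a b, Om a -> Om b -> `|g a - g b| <= L * `|a - b|) ->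
  (forall t, 0 <= t <= 1 -> Om (u + t *: w)) ->
  `|J (u + w) - J u - ip (g u) w| <= L * `|w| ^+ 2.
Proof.
move=> HJ L0 HL Hseg.
have hd := phi_deriv u w HJ.
have cont : {within `[0, 1], continuous (fun t : R => J (u + t *: w))}.
  apply: derivable_within_continuous => t _.
  by case: (hd t).
have [c /[!in_itv] /= /andP[c0 c1] E] := MVT_segment ler01 (fun t _ => hd t) cont.
move: E; rewrite subr0 mulr1 scale1r scale0r addr0 => ->.
rewrite -(fBl ip_lin).
apply: le_trans (ip_CS _ _) _.
have := HL _ _ (Hseg c (introT andP (conj c0 c1))) (Hseg 0 (introT andP (conj (lexx 0) ler01))).
rewrite scale0r addr0 addrAC subrr add0r normrZ ger0_norm // => h.
have h1 := ler_wpM2r (normr_ge0 w) h.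
have h2 : 0 <= L * `|w| ^+ 2 * (1 - c) by rewrite mulr_ge0 ?mulr_ge0 ?sqr_ge0 // subr_ge0.
move: h1 h2; rewrite expr2; nra.
Qed.

End Hilb.

Lemma zmod6 (V : zmodType) (x1 x2 y1 y2 z1 z2 : V) :
  (x1 + x2) + (y1 + y2) - (z1 + z2) = (x1 + y1 - z1) + (x2 + y2 - z2).
Proof. by rewrite [(x1 + x2) + _]addrACA opprD [LHS]addrACA. Qed.

Section BFGS.
Variables (R : realType) (X : completeNormedModType R) (ip : X -> X -> R).
Hypothesis Hip : inner_product ip.

Definition Pgood (B : X -> X) := [/\ linear_op B, symmetric_op ip B & psd_op ip B].

Let ipDr := fDr (ip_sym Hip) (ip_lin Hip).
Let ipZr := fZr (ip_sym Hip) (ip_lin Hip).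
Let ipDl := fDl (ip_lin Hip).
Let ipZl := fZl (ip_lin Hip).
Let ipBl := fBl (ip_lin Hip).

Lemma ip_update B s y v w :
  ip (bfgs_update ip B s y v) w =
  ip (B v) w + ip y v / ip y s * ip y w - ip (B s) v / ip s (B s) * ip (B s) w.
Proof. by rewrite /bfgs_update ipBl ipDl !ipZl. Qed.

Lemma update_good B s y : Pgood B -> 0 < ip y s -> Pgood (bfgs_update ip B s y).
Proof.
move=> [hl hs hp] ys; split.
- move=> a u v; rewrite /bfgs_update hl !ipDr !ipZr !mulrDl !scalerDl.
  rewrite -!mulrA -!(scalerA a) scalerBr scalerDr.
  exact: zmod6.
- move=> u v; rewrite ip_update (ip_sym Hip u) ip_update.
  rewrite (hs u v) (ip_sym Hip u) (ip_sym Hip (B s) v) (ip_sym Hip y v).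
  rewrite (ip_sym Hip (B s) u) (ip_sym Hip y u).
  ring.
- move=> v; rewrite ip_update.
  have fsym : forall u v, ip (B u) v = ip (B v) u by move=> u1 v1; rewrite hs (ip_sym Hip).
  have flin : forall a u v w, ip (B (a *: u + v)) w = a * ip (B u) w + ip (B v) w.
    by move=> a u' v' w'; rewrite hl ip_lin.
  have cs := f_CS fsym flin hp s v.
  have d0 : 0 <= ip s (B s) by rewrite (ip_sym Hip); apply: hp.
  have t1 : 0 <= ip y v / ip y s * ip y v.
    by rewrite mulrAC -expr2 mulr_ge0 ?sqr_ge0 // invr_ge0 ltW.
  have t2 : ip (B s) v / ip s (B s) * ip (B s) v <= ip (B v) v.
    rewrite mulrAC -expr2; have [d00|dpos] := eqVneq (ip s (B s)) 0.
      by rewrite d00 invr0 mulr0; apply: hp.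
    have dp : 0 < ip s (B s) by rewrite lt_def dpos d0.
    rewrite ler_pdivrMr // mulrC; move: cs; rewrite (ip_sym Hip s).
    by rewrite (ip_sym Hip (B s) s).
  have := hp v; lra.
Qed.

Lemma foldl_good cs s y (B0 : X -> X) js : 0 <= cs -> Pgood B0 ->
  Pgood (lbfgs_op ip cs s y B0 js).
Proof.
move=> cs0; rewrite /lbfgs_op; elim: js B0 => [|j js IH] B0 hB0 //=.
apply: IH; case: ifP => // hc; apply: update_good => //.
apply: le_lt_trans hc; rewrite mulr_ge0 // sqr_ge0.
Qed.

Lemma B0_good (t : R) (S0 : X -> X) : 0 <= t ->
  [/\ bounded_linear S0, symmetric_op ip S0 & psd_op ip S0] ->
  Pgood (fun w => t *: w + S0 w).
Proof.
move=> t0 [[hl _] hs hp]; split.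
- move=> a u v; rewrite hl scalerDr !scalerA (mulrC t a) -!scalerA scalerDr.
  by rewrite addrACA.
- by move=> u v; rewrite ipDl ipZl hs ipDr ipZr.
- move=> v; rewrite ipDl ipZl ip_norm //; apply: addr_ge0; last exact: hp.
  by rewrite mulr_ge0 // sqr_ge0.
Qed.

End BFGS.

Section Tau.
Variables (R : realType) (X : completeNormedModType R) (ip : X -> X -> R).

Lemma projP_ge0 (wl : R) (wu : \bar R) t : 0 <= wl -> (0 <= wu)%E -> 0 <= projP wl wu t.
Proof.
move=> wl0 wu0; rewrite /projP; apply: fine_ge0.
rewrite le_min wu0 andbT lee_fin le_max wl0 orbT //.
Qed.

Lemma tau_ge0 c0 C0 c1 c2 useg gn z s tn :
  0 <= c0 -> 0 < c1 -> tau_rule ip c0 C0 c1 c2 useg gn z s tn -> 0 <= tn.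
Proof.
move=> c00 c10; rewrite /tau_rule.
set wl := Num.min _ _; set wu := maxe _ _.
have p0 : 0 <= c1 * `|gn| `^ c2 by rewrite mulr_ge0 ?powR_ge0 // ltW.
have wl0 : 0 <= wl by rewrite /wl le_min c00 p0.
have wu0 : (0 <= wu)%E by rewrite /wu le_max lee_fin invr_ge0 p0 orbT.
have := projP_ge0 (ip z s / `|s| ^+ 2) wl0 wu0.
by case: ifP => _ h /andP[h1 _]; apply: le_trans h h1.
Qed.

End Tau.

Section Topo.
Variables (R : realType) (X : completeNormedModType R).

Lemma nbhs_normball (P : set X) x : nbhs x P ->
  exists2 r : R, 0 < r & forall u, `|u - x| < r -> P u.
Proof.
move=> /nbhs_ballP [r r0 H]; exists r => // u hu; apply: H.
by rewrite -ball_normE /= distrC.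
Qed.

Lemma cont_ball (J : X -> R) x : J @ x --> J x ->
  forall e : R, 0 < e -> exists2 r : R, 0 < r & forall u, `|u - x| < r -> `|J u - J x| < e.
Proof.
move=> /cvgrPdist_lt H e e0; have := H e e0 => /nbhs_normball [r r0 Hr].
by exists r => // u /Hr; rewrite distrC.
Qed.

Lemma cluster_near (x : nat -> X) xs : cluster (x @ \oo) xs ->
  forall (n0 : nat) (r : R), 0 < r -> exists k, (n0 <= k)%N /\ `|x k - xs| < r.
Proof.
move=> Hc n0 r r0.
have hA : (x @ \oo) [set u | exists2 k, (n0 <= k)%N & u = x k].
  by exists n0 => // k /= hk; exists k.
have hB : nbhs xs (ball xs r) by apply: nbhsx_ballx.
have [u [[k hk ->] hb]] := Hc _ _ hA hB.
exists k; split => //; move: hb; rewrite -ball_normE /=.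
by rewrite distrC.
Qed.

End Topo.

Section Seqs.
Variable R : realType.

Lemma mono_seq (a : nat -> R) : (forall k, a k.+1 <= a k) ->
  forall m n, (m <= n)%N -> a n <= a m.
Proof.
move=> H m n /subnK <-; elim: (n - m)%N => [|j IH]; first by rewrite add0n.
by rewrite addSn; apply: le_trans (H _) IH.
Qed.

Lemma prefix_min (a : nat -> R) : (forall k, 0 < a k) ->
  forall n, exists2 c, 0 < c & forall k, (k < n)%N -> c <= a k.
Proof.
move=> H; elim=> [|n [c c0 Hc]]; first by exists 1.
exists (Num.min c (a n)); first by rewrite lt_min c0 H.
move=> k; rewrite ltnS leq_eqVlt => /orP[/eqP->|hk]; first by rewrite ge_min lexx orbT.
by rewrite ge_min Hc.
Qed.

Lemma prefix_max (f : nat -> R) (q : R) : 0 < q ->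
  forall n, exists C, forall k, (k < n)%N -> f k <= C * q ^+ k.
Proof.
move=> q0; elim=> [|n [C HC]]; first by exists 0.
exists (Num.max C (f n / q ^+ n)) => k.
have qk : forall j, 0 < q ^+ j by move=> j; rewrite exprn_gt0.
rewrite ltnS leq_eqVlt => /orP[/eqP->|hk].
  by rewrite -ler_pdivrMr // le_max lexx orbT.
apply: le_trans (HC _ hk) _; rewrite ler_pM2r //; by rewrite le_max lexx.
Qed.


Lemma rlin_eventually (f : nat -> R) (C q : R) (K : nat) : 0 <= q < 1 ->
  (forall k, (K <= k)%N -> f k <= C * q ^+ k) -> rlinear f.
Proof.
move=> /andP[q0 q1] H.
pose q' := Num.max q (2^-1).
have q'0 : 0 < q' by rewrite lt_max invr_gt0 ltr0n orbT.
have q'1 : q' < 1 by rewrite gt_max q1 invf_lt1 // ?ltr0n // ltr1n.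
have [Cp HCp] := prefix_max f q'0 K.
exists (Num.max (Num.max C 0) Cp), q'; split; first by rewrite ltW // q'1.
move=> k; have qk : 0 < q' ^+ k by rewrite exprn_gt0.
have [hk|hk] := leqP K k.
  apply: le_trans (H _ hk) _.
  have e1 : C * q ^+ k <= Num.max C 0 * q ^+ k.
    by rewrite ler_wpM2r ?exprn_ge0 // le_max lexx.
  apply: le_trans e1 _.
  have qq : q ^+ k <= q' ^+ k.
    by apply: lerXn2r; [rewrite nnegrE | rewrite nnegrE ltW | rewrite le_max lexx].
  have c0 : 0 <= Num.max C 0 by rewrite le_max lexx orbT.
  apply: le_trans (ler_wpM2l c0 qq) _.
  apply: ler_wpM2r; first exact: ltW. by rewrite le_max lexx.
apply: le_trans (HCp _ hk) _; rewrite ler_pM2r // le_max lexx orbT //.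
Qed.

Lemma tail_geom (e : nat -> R) (q : R) (K : nat) : 0 <= q < 1 ->
  (forall k, (K <= k)%N -> 0 <= e k) ->
  (forall k, (K <= k)%N -> e k.+1 <= q * e k) ->
  exists (C q' : R), 0 < q' < 1 /\ forall k, (K <= k)%N -> e k <= C * q' ^+ k.
Proof.
move=> /andP[q0 q1] e0 H.
pose q' := Num.max q (2^-1).
have q'0 : 0 < q' by rewrite lt_max invr_gt0 ltr0n orbT.
have q'1 : q' < 1 by rewrite gt_max q1 invf_lt1 // ?ltr0n // ltr1n.
have qq : q <= q' by rewrite le_max lexx.
exists (e K / q' ^+ K), q'; split; first by rewrite q'0 q'1.
have main : forall n, e (K + n)%N <= e K / q' ^+ K * q' ^+ (K + n)%N.
  elim=> [|n IH]; first by rewrite addn0 divfK // gt_eqF // exprn_gt0.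
  rewrite addnS exprS.
  have h1 := H (K + n)%N (leq_addr _ _).
  have h2 := e0 (K + n)%N (leq_addr _ _).
  apply: le_trans h1 _; apply: le_trans (ler_wpM2r h2 qq) _.
  by rewrite mulrCA ler_wpM2l // ltW.
by move=> k /subnKC <-; apply: main.
Qed.

End Seqs.

Lemma conv_eq (R : realType) (X : completeNormedModType R) (a : R) (u v : X) :
  a *: u + (1 - a) *: v = v + a *: (u - v).
Proof. by rewrite scalerBl scale1r scalerBr addrCA addrA. Qed.

Lemma convex_setP (R : realType) (X : completeNormedModType R) (N : set X) :
  convex_set N -> forall u v (l : R), N u -> N v -> 0 <= l <= 1 -> N (l *: u + (1 - l) *: v).
Proof.
move=> H u v l Nu Nv /andP[l0 l1].
have := H u v (Itv01 l0 l1); rewrite !inE => /(_ Nu Nv).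
by [].
Qed.

Theorem theorem4p15
  (R : realType) (X : completeNormedModType R) (ip : X -> X -> R)
  (J : X -> R) (g : X -> X)
  (ell : nat) (c0 : R) (C0 : \bar R) (cs c1 c2 sigma L : R) (useg : bool)
  (x d s y : nat -> X) (alpha tau : nat -> R)
  (S B Binv : nat -> X -> X)
  (xs : X) (N : set X) (kappa : R) :
  (* X is a real Hilbert space with inner product ip *)
  inner_product ip ->
  (* 1) J continuously differentiable with gradient g, bounded below *)
  (forall u, differentiable J u /\ forall h, 'd J u h = ip (g u) h) ->
  continuous g ->
  (exists b : R, forall u, b <= J u) ->
  (* 2) g Lipschitz on Omega *)
  0 < L ->
  (forall u v, J u <= J (x 0%N) -> J v <= J (x 0%N) ->
     `|g u - g v| <= L * `|u - v|) ->
  (* parameters *)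
  0 <= c0 -> (c0%:E <= C0)%E -> 0 < cs -> 0 < c1 -> 0 < c2 -> 0 < tau 0%N ->
  (* the operators S_k, 3) bounded norms *)
  (forall k, [/\ bounded_linear (S k), symmetric_op ip (S k) & psd_op ip (S k)]) ->
  (exists M : R, forall k, opnorm (S k) <= M) ->
  (* L-BFGS operator B_k from B_k^(0) = tau_k I + S_k and the stored pairs *)
  (forall k v, B k v = lbfgs_op ip cs s y (fun w => tau k *: w + S k w)
                          (stored_window ell k) v) ->
  (forall k, inverse_ops (B k) (Binv k)) ->
  (* iteration *)
  (forall k, d k = - Binv k (g (x k))) ->
  (forall k, 0 < alpha k) ->
  (forall k, s k = alpha k *: d k) ->
  (forall k, x k.+1 = x k + s k) ->
  (forall k, y k = g (x k.+1) - g (x k)) ->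
  (* 7) eps = 0 and the algorithm never stops *)
  (forall k, g (x k.+1) != 0) ->
  (* choice of tau_{k+1} *)
  (forall k, tau_rule ip c0 C0 c1 c2 useg (g (x k.+1))
               (y k - S k.+1 (s k)) (s k) (tau k.+1)) ->
  (* 4) line search: consistently Armijo-backtracking or Wolfe-Powell *)
  0 < sigma < 1 ->
  ((exists beta : R, 0 < beta < 1 /\
      forall k, armijo_backtracking ip J g sigma beta (x k) (d k) (alpha k)) \/
   (exists eta : R, sigma < eta < 1 /\
      forall k, wolfe_powell ip J g sigma eta (x k) (d k) (alpha k))) ->
  (* 5) *)
  (c0 = 0 -> exists M : R, forall k, exists B0inv : X -> X,
       inverse_ops (fun w => tau k *: w + S k w) B0inv /\
       bounded_linear B0inv /\ opnorm B0inv <= M) ->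
  (* 6) *)
  (C0 = +oo%E -> useg \/ hessian_condition ip g S x s) ->
  (* 8) *)
  (exists M : R, forall k, [/\ bounded_linear (B k), bounded_linear (Binv k),
     opnorm (B k) <= M & opnorm (Binv k) <= M]) ->
  (* cluster point with strongly convex neighbourhood *)
  cluster (x @ \oo) xs ->
  N `<=` [set u | J u <= J (x 0%N)] -> convex_set N -> nbhs xs N ->
  0 < kappa -> strongly_convex_on J N kappa ->
  [/\ (forall u, N u -> J xs + kappa * `|u - xs| ^+ 2 <= J u),
      rlinear (fun k => `|x k - xs|),
      rlinear (fun k => `|g (x k)|),
      qlinear (fun k => J (x k) - J xs)
    & forall kb : nat, (forall k, (kb <= k)%N -> N (x k)) ->
        (forall k, (kb <= k)%N ->
           J (x k.+1) - J xs <=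
             (1 - 2 * sigma * alpha k * kappa / opnorm (B k)) * (J (x k) - J xs)) /\
        exists2 q : R, q < 1 &
          forall k, (kb <= k)%N -> 1 - 2 * sigma * alpha k * kappa / opnorm (B k) <= q].
Proof.
move=> Hip HJ gcont [b Hb] L0 HL c00 hC0 cs0 c10 c20 tau00 HS _ HB HBinv Hd Ha
  Hs Hx Hy Hg Htau /andP[sg0 sg1] Hls _ _ [MB HMB] Hcl HN Nconv Nnb kap0 Hsc.
have ipsym := ip_sym Hip.
have ipNr := fNr (ip_sym Hip) (ip_lin Hip).
have ipZr := fZr (ip_sym Hip) (ip_lin Hip).
have ipBl := fBl (ip_lin Hip).
have ip0l := f0l (ip_lin Hip).
have tau0 : forall k, 0 <= tau k.
  by case=> [|k]; [exact: ltW | exact: tau_ge0 c00 c10 (Htau k)].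
have Bgood : forall k, Pgood ip (B k).
  move=> k; have [hl hs hp] := foldl_good Hip s y (stored_window ell k) (ltW cs0)
    (B0_good Hip (tau0 k) (HS k)).
  split.
  - by move=> a u v; rewrite !HB; apply: hl.
  - by move=> u v; rewrite !HB; apply: hs.
  - by move=> v; rewrite !HB; apply: hp.
have hBl k : bounded_linear (B k) by case: (HMB k).
have hBil k : bounded_linear (Binv k) by case: (HMB k).
have nB k : opnorm (B k) <= MB by case: (HMB k).
have nBi k : opnorm (Binv k) <= MB by case: (HMB k).
have gnz : forall k, g (x k) != 0.
  case=> [|k]; last exact: Hg.
  apply/negP => /eqP g0; have := Hg 0%N.
  rewrite Hx Hs Hd g0 (lin0 (A:=Binv 0%N)) ?oppr0 ?scaler0 ?addr0 ?g0 ?eqxx //.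
  by case: (hBil 0%N).
have Bw : forall k, B k (Binv k (g (x k))) = g (x k) by move=> k; case: (HBinv k (g (x k))).
have Dk : forall k, `|g (x k)| ^+ 2 <= opnorm (B k) * (- ip (g (x k)) (d k)).
  move=> k; rewrite Hd ipNr opprK -{1 2}(Bw k).
  by have [_ hs hp] := Bgood k; apply: psd_key.
have nBpos : forall k, 0 < opnorm (B k).
  move=> k; have h := opnorm_le (Binv k (g (x k))) (hBl k); rewrite Bw in h.
  rewrite lt_def opnorm_ge0 // andbT; apply/eqP => e0; move: h; rewrite e0 mul0r.
  by rewrite normr_le0 (negbTE (gnz k)).
have MBpos : 0 < MB := lt_le_trans (nBpos 0%N) (nB 0%N).
have Dpos : forall k, 0 < - ip (g (x k)) (d k).
  move=> k; have := Dk k; have : 0 < `|g (x k)| ^+ 2 by rewrite exprn_gt0 // normr_gt0.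
  have := nBpos k; nra.
have Dk2 : forall k, `|g (x k)| ^+ 2 <= MB * (- ip (g (x k)) (d k)).
  move=> k; apply: le_trans (Dk k) _; apply: ler_wpM2r; [exact: ltW (Dpos k) | exact: nB].
have dk : forall k, `|d k| <= MB * `|g (x k)|.
  move=> k; rewrite Hd normrN; apply: le_trans (opnorm_le _ (hBil k)) _.
  by apply: ler_wpM2r (nBi k).
have Harm : forall k, J (x k.+1) <= J (x k) + alpha k * sigma * ip (g (x k)) (d k).
  move=> k; rewrite Hx Hs; case: Hls => [[beta [_ H]] | [eta [_ H]]].
  - by have [i [_ [h _]]] := H k.
  - by have [h _] := H k.
have Jdec : forall k, J (x k.+1) <= J (x k).
  move=> k; have := Harm k; have := mulr_gt0 (mulr_gt0 (Ha k) sg0) (Dpos k); lra.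
have Omx : forall k, J (x k) <= J (x 0%N).
  by move=> k; apply: (mono_seq (a := fun k => J (x k)) Jdec (leq0n k)).
have [r0 r00 inN] := nbhs_normball Nnb.
pose r := r0 / 2.
have r_pos : 0 < r by rewrite divr_gt0.
have r2 : r + r = r0 by rewrite /r -splitr.
have Nxs : N xs by apply: inN; rewrite subrr normr0.
have Omxs : J xs <= J (x 0%N) := HN _ Nxs.
have gbound : forall k, `|x k - xs| < r -> `|g (x k)| <= `|g xs| + L * r.
  move=> k hk; have h1 := HL _ _ (Omx k) Omxs.
  have h2 := ler_normD (g xs) (g (x k) - g xs); rewrite (addrC (g xs)) subrK in h2.
  have h3 := ler_wpM2l (ltW L0) (ltW hk); lra.
have d2 : forall k, `|d k| ^+ 2 <= MB ^+ 3 * (- ip (g (x k)) (d k)).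
  move=> k; have h1 := dk k; have h0 := normr_ge0 (d k).
  have h3 : `|d k| ^+ 2 <= MB ^+ 2 * `|g (x k)| ^+ 2.
    rewrite -exprMn; apply: lerXn2r; rewrite ?nnegrE //.
    by apply: mulr_ge0 (ltW MBpos) (normr_ge0 _).
  apply: le_trans h3 _; apply: le_trans (ler_wpM2l _ (Dk2 k)) _.
    by rewrite exprn_ge0 // ltW.
  by rewrite mulrA -exprSr.
have step : exists2 c, 0 < c & forall k, `|x k - xs| < r -> c <= alpha k.
  case: Hls => [[beta [/andP[be0 be1] H]] | [eta [/andP[se e1] H]]]; last first.
    exists ((1 - eta) / (L * MB ^+ 3)).
      by rewrite divr_gt0 ?subr_gt0 // mulr_gt0 // exprn_gt0.
    move=> k _; have [_ cw] := H k; rewrite -Hs -Hx in cw.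
    have h1 : ip (g (x k.+1)) (d k) - ip (g (x k)) (d k) <= L * alpha k * `|d k| ^+ 2.
      rewrite -ipBl; apply: le_trans (ler_norm _) _; apply: le_trans (ip_CS Hip _ _) _.
      have := HL _ _ (Omx k.+1) (Omx k).
      rewrite Hx addrAC subrr add0r Hs normrZ gtr0_norm ?Ha // => h.
      have := ler_wpM2r (normr_ge0 (d k)) h; rewrite expr2; nra.
    have h3 := ler_wpM2l (mulr_ge0 (ltW L0) (ltW (Ha k))) (d2 k).
    have hD := Dpos k.
    have h4 : (1 - eta) * (- ip (g (x k)) (d k)) <=
              (alpha k * (L * MB ^+ 3)) * (- ip (g (x k)) (d k)) by nra.
    by rewrite ler_pM2r // in h4; rewrite ler_pdivrMr // mulr_gt0 // exprn_gt0.
  pose G := `|g xs| + L * r.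
  have G0 : 0 < G by have := normr_ge0 (g xs); have := mulr_gt0 L0 r_pos; rewrite /G; lra.
  pose m := Num.min ((1 - sigma) / (L * MB ^+ 3)) (r / (MB * G)).
  have m0 : 0 < m by rewrite lt_min !divr_gt0 ?subr_gt0 // ?mulr_gt0 // exprn_gt0.
  exists (Num.min 1 (beta * m)); first by rewrite lt_min ltr01 mulr_gt0.
  move=> k hk; have [i [ai [_ hna]]] := H k.
  case: i ai hna => [|j] ai hna; first by rewrite ai expr0 ge_min lexx.
  pose t := beta ^+ j.
  have t0 : 0 < t by rewrite exprn_gt0.
  have at_ : alpha k = beta * t by rewrite ai exprS.
  have nt := hna j (ltnSn j).
  suff mt : m <= t by rewrite at_ ge_min; apply/orP; right; rewrite ler_pM2l.
  have nt' : J (x k) + t * sigma * ip (g (x k)) (d k) < J (x k + t *: d k).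
    by rewrite ltNge; apply/negP.
  have [small|big] := ltP (t * `|d k|) r.
    have seg : forall tau, 0 <= tau <= 1 -> J (x k + tau *: (t *: d k)) <= J (x 0%N).
      move=> ta /andP[ta0 ta1]; apply: HN; apply: inN.
      rewrite addrAC; apply: le_lt_trans (ler_normD _ _) _.
      rewrite normrZ ger0_norm // normrZ ger0_norm ?ltW //.
      have : ta * (t * `|d k|) <= t * `|d k|.
        have := ler_wpM2r (mulr_ge0 (ltW t0) (normr_ge0 (d k))) ta1.
        by rewrite mul1r.
      lra.
    have hd := descent (Om := fun u => J u <= J (x 0%N)) Hip HJ (ltW L0) HL seg.
    rewrite ipZr normrZ gtr0_norm // exprMn in hd.
    move: hd => /ler_normlP [_ hd].
    have hD := Dpos k; have h2 := d2 k.
    have h3 := ler_wpM2l (mulr_ge0 (ltW L0) (sqr_ge0 t)) h2.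
    have h4 : (1 - sigma) * t * (- ip (g (x k)) (d k)) <
              (t * (L * MB ^+ 3)) * t * (- ip (g (x k)) (d k)) by nra.
    rewrite ltr_pM2r // ltr_pM2r // in h4.
    rewrite ge_min; apply/orP; left; rewrite ler_pdivrMr ?mulr_gt0 ?exprn_gt0 //.
    by rewrite ltW.
  rewrite ge_min; apply/orP; right; rewrite ler_pdivrMr ?mulr_gt0 //.
  have h1 := dk k; have h2 := gbound k hk.
  have h3 := ler_wpM2l (ltW MBpos) h2.
  have h4 : `|d k| <= MB * G by apply: le_trans h1 h3.
  apply: le_trans big _; rewrite ler_pM2l //.
have [c cpos Hc] := step.
have gxs0 : g xs = 0.
  apply/eqP; apply: contraT => gn; pose ga := `|g xs|.
  have ga0 : 0 < ga by rewrite normr_gt0.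
  pose rho := Num.min r (ga / (2 * L)).
  have rho0 : 0 < rho by rewrite lt_min r_pos divr_gt0 // mulr_gt0.
  pose D0 := c * sigma * (ga / 2) ^+ 2 / MB.
  have D00 : 0 < D0 by rewrite divr_gt0 // mulr_gt0 ?mulr_gt0 // exprn_gt0 // divr_gt0.
  have drop : forall k, `|x k - xs| < rho -> J (x k.+1) <= J (x k) - D0.
    move=> k hk.
    have hkr : `|x k - xs| < r by apply: lt_le_trans hk _; rewrite ge_min lexx.
    have hkg : `|x k - xs| < ga / (2 * L) by apply: lt_le_trans hk _; rewrite ge_min lexx orbT.
    have hg : ga / 2 <= `|g (x k)|.
      have h1 := HL _ _ (Omx k) Omxs.
      have h2 := ler_normD (g (x k)) (g xs - g (x k)); rewrite addrC subrK in h2.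
      rewrite distrC in h1.
      have : L * `|x k - xs| <= ga / 2.
        rewrite ltr_pdivlMr ?mulr_gt0 // in hkg.
        have e : `|x k - xs| * (2 * L) = (L * `|x k - xs|) * 2 by ring.
        rewrite e in hkg; rewrite ler_pdivlMr //; exact: ltW.
      rewrite -/ga in h2; lra.
    have hg2 : (ga / 2) ^+ 2 <= `|g (x k)| ^+ 2.
      by apply: lerXn2r; rewrite ?nnegrE // divr_ge0 // ltW.
    have hD := Dk2 k; have ha := Hc k hkr; have hA := Harm k.
    have h5 : (ga / 2) ^+ 2 <= MB * (- ip (g (x k)) (d k)) by apply: le_trans hg2 hD.
    have h6 : c * sigma * (ga / 2) ^+ 2 <= alpha k * sigma * (MB * (- ip (g (x k)) (d k))).
      apply: le_trans (ler_wpM2l (mulr_ge0 (ltW cpos) (ltW sg0)) h5) _.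
      apply: ler_wpM2r; first by rewrite mulr_ge0 // ltW // Dpos.
      by rewrite ler_wpM2r // ltW.
    have h7 : D0 * MB <= alpha k * sigma * (MB * (- ip (g (x k)) (d k))).
      by rewrite /D0 divfK // gt_eqF.
    have h8 : D0 <= alpha k * sigma * (- ip (g (x k)) (d k)).
      rewrite -(ler_pM2r MBpos); apply: le_trans h7 _; rewrite le_eqVlt; apply/orP; left; apply/eqP; ring.
    lra.
  have iter : forall m : nat, exists k, J (x k) <= J (x 0%N) - m%:R * D0.
    elim=> [|m [k hk]]; first by exists 0%N; rewrite mul0r subr0.
    have [k' [hk' hb]] := cluster_near Hcl k rho0.
    exists k'.+1; have := drop k' hb; have := mono_seq (a := fun k => J (x k)) Jdec hk'.
    move=> /= h1 h2; rewrite -[m.+1]addn1 natrD mulrDl mul1r; lra.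
  have Jb0 : 0 <= (J (x 0%N) - b) / D0 by rewrite divr_ge0 ?subr_ge0 ?Hb // ltW.
  have hm := archi_boundP Jb0; set m := archi_bound _ in hm.
  have [k hk] := iter m.
  rewrite ltr_pdivrMr // in hm; have := Hb (x k); lra.
have Om_of_N : forall u, N u -> J u <= J (x 0%N) by move=> u /HN.
have segN : forall u v l, N u -> N v -> 0 <= l <= 1 ->
    forall ta, 0 <= ta <= 1 -> J (v + ta *: (l *: (u - v))) <= J (x 0%N).
  move=> u v l Nu Nv /andP[l0 l1] ta /andP[ta0 ta1].
  rewrite scalerA -conv_eq; apply: Om_of_N; apply: (@convex_setP _ _ _ Nconv) => //.
  by rewrite mulr_ge0 //= mulr_ile1.
have concl1 : forall u, N u -> J xs + kappa * `|u - xs| ^+ 2 <= J u.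
  move=> u Nu; apply: (le_limit0 (c := (kappa + L) * `|u - xs| ^+ 2)) => l /andP[l0 l1].
  have l01 : 0 <= l <= 1 by rewrite ltW.
  have E2 := Hsc u xs l Nu Nxs l01; rewrite conv_eq in E2.
  have E1 := descent (Om := fun u => J u <= J (x 0%N)) Hip HJ (ltW L0) HL (segN u xs l Nu Nxs l01).
  rewrite gxs0 ip0l normrZ gtr0_norm // exprMn subr0 in E1.
  move: E1 => /ler_normlP [E1 _].
  rewrite -(ler_pM2l l0); nra.
have PL : forall u, N u -> 4 * kappa * (J u - J xs) <= `|g u| ^+ 2.
  move=> u Nu.
  have key : J u - J xs + ip (g u) (xs - u) + kappa * `|xs - u| ^+ 2 <= 0.
    apply: (le_limit0 (c := (L + kappa) * `|xs - u| ^+ 2)) => l /andP[l0 l1].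
    have l01 : 0 <= l <= 1 by rewrite ltW.
    have E2 := Hsc xs u l Nxs Nu l01; rewrite conv_eq in E2.
    have E1 := descent (Om := fun u => J u <= J (x 0%N)) Hip HJ (ltW L0) HL (segN xs u l Nxs Nu l01).
    rewrite ipZr normrZ gtr0_norm // exprMn in E1.
    move: E1 => /ler_normlP [E1 _].
    rewrite add0r -(ler_pM2l l0); nra.
  have hcs := ip_CS Hip (g u) (xs - u).
  move: hcs => /ler_normlP [hcs _].
  have h := sqr_ge0 (`|g u| - 2 * kappa * `|xs - u|).
  have := normr_ge0 (xs - u); have := normr_ge0 (g u).
  nra.
have F2 : forall k, J xs <= J (x k).
  move=> m; rewrite leNgt; apply/negP => hm.
  have Jc : J @ xs --> J xs by apply: differentiable_continuous; case: (HJ xs).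
  have e0 : 0 < J xs - J (x m) by rewrite subr_gt0.
  have [del del0 Hdel] := cont_ball Jc e0.
  have [k [hk hkb]] := cluster_near Hcl m del0.
  have h1 := Hdel _ hkb; have h2 := mono_seq (a := fun k => J (x k)) Jdec hk.
  move: h1 => /ltr_normlP [h1 _]; simpl in h2; lra.
have rr0 : r < r0 by rewrite -r2 ltrDr.
have Nball : forall k, `|x k - xs| < r -> N (x k).
  by move=> k hk; apply: inN; apply: lt_trans hk rr0.
have gle : forall u, J u <= J (x 0%N) -> `|g u| <= L * `|u - xs|.
  by move=> u hu; have := HL _ _ hu Omxs; rewrite gxs0 subr0.
pose C2 := MB ^+ 2 * L / (4 * kappa * sigma).
have C20 : 0 <= C2 by rewrite /C2 divr_ge0 ?mulr_ge0 ?exprn_ge0 // ?ltW // mulr_gt0 // mulr_gt0.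
have stepx : forall k, `|x k - xs| < r -> `|x k.+1 - xs| <= (1 + C2) * `|x k - xs|.
  move=> k hk; have Nk := Nball k hk.
  have hA := Harm k; have hF := F2 k.+1; have hP := PL _ Nk.
  have h2 := Dk2 k; have h3 := dk k; have hD := Dpos k; have hg := gle _ (Omx k).
  have ha : 4 * kappa * sigma * alpha k <= MB.
    have h1 : 4 * kappa * sigma * alpha k * (- ip (g (x k)) (d k)) <= `|g (x k)| ^+ 2.
      apply: le_trans hP; rewrite -!mulrA; apply: ler_wpM2l; first by rewrite ler0n.
      apply: ler_wpM2l; first exact: ltW.
      have := Ha k; lra.
    have h4 : 4 * kappa * sigma * alpha k * (- ip (g (x k)) (d k)) <=
              MB * (- ip (g (x k)) (d k)) by apply: le_trans h1 h2.
    by rewrite ler_pM2r in h4.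
  have hs : `|s k| <= C2 * `|x k - xs|.
    rewrite Hs normrZ gtr0_norm ?Ha //.
    have k4 : 0 < 4 * kappa * sigma by rewrite !mulr_gt0.
    rewrite /C2 mulrAC ler_pdivlMr //.
    have e1 : alpha k * `|d k| <= alpha k * (MB * (L * `|x k - xs|)).
      apply: ler_wpM2l; first exact: ltW.
      apply: le_trans h3 _; rewrite ler_pM2l //.
    have e2 := ler_wpM2r (mulr_ge0 (ltW MBpos) (mulr_ge0 (ltW L0) (normr_ge0 (x k - xs)))) ha.
    have e3 := ler_wpM2r (ltW k4) e1.
    apply: le_trans e3 _; move: e2; rewrite expr2; nra.
  rewrite Hx addrAC; apply: le_trans (ler_normD _ _) _; lra.
pose rho' := r / (1 + C2).
have rho'0 : 0 < rho' by rewrite divr_gt0 // ltr_pwDl.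
have rho'e : (1 + C2) * rho' = r by rewrite /rho' mulrC divfK // gt_eqF // ltr_pwDl.
pose eps := kappa * rho' ^+ 2.
have eps0 : 0 < eps by rewrite mulr_gt0 // exprn_gt0.
have Jc : J @ xs --> J xs by apply: differentiable_continuous; case: (HJ xs).
have [del del0 Hdel] := cont_ball Jc eps0.
have mrd : 0 < Num.min r del by rewrite lt_min r_pos del0.
have [K [_ hK]] := cluster_near Hcl 0%N mrd.
have inv : forall n, `|x (K + n)%N - xs| < r /\ J (x (K + n)%N) - J xs < eps.
  elim=> [|n [h1 h2]].
    rewrite addn0; split; first by apply: lt_le_trans hK _; rewrite ge_min lexx.
    have : `|x K - xs| < del by apply: lt_le_trans hK _; rewrite ge_min lexx orbT.
    by move=> /Hdel /ltr_normlP [_ h].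
  have hc := concl1 _ (Nball _ h1).
  have hl : `|x (K + n)%N - xs| < rho'.
    have hsq : `|x (K + n)%N - xs| ^+ 2 < rho' ^+ 2.
      by rewrite -(ltr_pM2l kap0); rewrite /eps in h2; lra.
    by move: hsq; rewrite ltr_pXn2r // nnegrE ?normr_ge0 // ltW.
  rewrite addnS; split.
    apply: le_lt_trans (stepx _ h1) _; rewrite -rho'e ltr_pM2l //.
    by rewrite ltr_pwDl.
  by have := Jdec (K + n)%N; lra.
have trapK : forall k, (K <= k)%N -> `|x k - xs| < r.
  by move=> k /subnKC <-; case: (inv (k - K)%N).
have [cp cp0 Hcp] := prefix_min Ha K.
pose c' := Num.min c cp.
have c'0 : 0 < c' by rewrite lt_min cpos cp0.
have aglob : forall k, c' <= alpha k.
  move=> k; have [hk|hk] := leqP K k.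
    by apply: le_trans (Hc _ (trapK _ hk)); rewrite ge_min lexx.
  by apply: le_trans (Hcp _ hk); rewrite ge_min lexx orbT.
have contr : forall k, N (x k) ->
    J (x k.+1) - J xs <= (1 - 2 * sigma * alpha k * kappa / opnorm (B k)) * (J (x k) - J xs).
  move=> k Nk; have hA := Harm k; have hP := PL _ Nk; have hc := concl1 _ Nk.
  have h1 := Dk k; have nb := nBpos k.
  have e0 : 0 <= J (x k) - J xs.
    by have := mulr_ge0 (ltW kap0) (sqr_ge0 `|x k - xs|); lra.
  have h2 : 2 * kappa * (J (x k) - J xs) / opnorm (B k) <= - ip (g (x k)) (d k).
    rewrite ler_pdivrMr //; have := mulr_ge0 (ltW kap0) e0; lra.
  have h3 := ler_wpM2l (mulr_ge0 (ltW (Ha k)) (ltW sg0)) h2.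
  have e : (1 - 2 * sigma * alpha k * kappa / opnorm (B k)) * (J (x k) - J xs) =
     (J (x k) - J xs) - alpha k * sigma * (2 * kappa * (J (x k) - J xs) / opnorm (B k)).
    by rewrite !mulrA; ring.
  rewrite e; lra.
pose q := 1 - 2 * sigma * c' * kappa / MB.
have q1 : q < 1.
  by rewrite /q ltrBlDr ltrDl !divr_gt0 // !mulr_gt0.
have facb : forall k, 1 - 2 * sigma * alpha k * kappa / opnorm (B k) <= q.
  move=> k; rewrite /q lerD2l lerN2.
  have nb := nBpos k; have hb := nB k; have ha := aglob k.
  have e1 : 2 * sigma * c' * kappa / MB = (2 * sigma * kappa) * (c' * opnorm (B k)) / (MB * opnorm (B k)).
    by field; rewrite !gt_eqF.
  have e2 : 2 * sigma * alpha k * kappa / opnorm (B k) = (2 * sigma * kappa) * (alpha k * MB) / (MB * opnorm (B k)).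
    by field; rewrite !gt_eqF.
  rewrite e1 e2; apply: ler_wpM2r; first by rewrite invr_ge0 mulr_ge0 // ltW.
  apply: ler_wpM2l; first by rewrite !mulr_ge0 // ltW.
  apply: le_trans (ler_wpM2r (ltW nb) ha) _.
  by apply: ler_wpM2l; [exact: ltW (Ha k) | exact: hb].
pose q' := Num.max q 0.
have q'0 : 0 <= q' by rewrite le_max lexx orbT.
have q'1 : q' < 1 by rewrite gt_max q1 ltr01.
have NK : forall k, (K <= k)%N -> N (x k) by move=> k hk; apply: Nball; apply: trapK.
have eK : forall k, (K <= k)%N -> J (x k.+1) - J xs <= q' * (J (x k) - J xs).
  move=> k hk; apply: le_trans (contr _ (NK _ hk)) _.
  have e0 : 0 <= J (x k) - J xs by rewrite subr_ge0.
  rewrite ler_wpM2r //; apply: le_trans (facb k) _; by rewrite le_max lexx.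
have enn : forall k, (K <= k)%N -> 0 <= J (x k) - J xs by move=> k _; rewrite subr_ge0.
have qq' : 0 <= q' < 1 by rewrite q'0 q'1.
have [C [q2 [/andP[q20 q21] HC]]] := tail_geom (e := fun k => J (x k) - J xs) qq' enn eK.
pose C' := Num.max C 0.
have C'0 : 0 <= C' by rewrite le_max lexx orbT.
have HC' : forall k, (K <= k)%N -> J (x k) - J xs <= C' * q2 ^+ k.
  move=> k hk; apply: le_trans (HC k hk) _; apply: ler_wpM2r.
    by rewrite exprn_ge0 // ltW.
  by rewrite le_max lexx.
pose s2 := Num.sqrt q2.
pose A := Num.sqrt (C' / kappa).
have s20 : 0 <= s2 by apply: sqrtr_ge0.
have s21 : s2 < 1 by rewrite /s2 -sqrtr1 ltr_sqrt // ltr01.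
have A0 : 0 <= A by apply: sqrtr_ge0.
have s2q : s2 ^+ 2 = q2 by rewrite /s2 sqr_sqrtr // ltW.
have Aq : A ^+ 2 = C' / kappa by rewrite /A sqr_sqrtr // divr_ge0 // ltW.
have xbound : forall k, (K <= k)%N -> `|x k - xs| <= A * s2 ^+ k.
  move=> k hk.
  have hn1 : `|x k - xs| \is Num.nneg by rewrite nnegrE normr_ge0.
  have hn2 : A * s2 ^+ k \is Num.nneg by rewrite nnegrE mulr_ge0 // exprn_ge0.
  rewrite -(ler_pXn2r (_ : (0 < 2)%N) hn1 hn2) //.
  rewrite exprMn -exprM mulnC exprM s2q Aq mulrAC ler_pdivlMr //.
  have hc := concl1 _ (NK _ hk); have := HC' k hk; lra.
have s2b : 0 <= s2 < 1 by rewrite s20 s21.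
split.
- exact: concl1.
- exact: (rlin_eventually (C := A) (K := K) s2b xbound).
- apply: (rlin_eventually (C := L * A) (K := K) s2b) => k hk.
  apply: le_trans (gle _ (Omx k)) _; rewrite -mulrA; apply: ler_wpM2l; first exact: ltW.
  exact: xbound.
- exists q', K; split; first by rewrite q'0 q'1.
  by move=> k hk; rewrite !ger0_norm ?subr_ge0 //; apply: eK.
- move=> kb Hkb; split; first by move=> k hk; apply: contr; apply: Hkb.
  by exists q => // k _; apply: facb.
Qed.
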